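(* Let $G$ be a graph and let $v$ be a cut vertex of $G$ which decomposes $G$ into $G_1=G(V_1)$ and $H=G(U)$, where $H$ is a cycle. Let $f$ be a divisor on $G$ such that $f_{N(H)}$ is good, and put $r=\rho_{G_1}(f_{G/H})$. Then $$\rho_G(f)=\begin{cases} r & \text{if } \rho_{G_1}(f_{G/H}-2\epsilon_v)\ge r-1,\\ r-1 & \text{if } \rho_{G_1}(f_{G/H}-2\epsilon_v)=r-2.\end{cases}$$
   Context: Graphs are finite, undirected, connected, loopless, possibly with multiple edges; $G(W)$ is the induced subgraph on $W$. A cycle is a connected graph with at least two vertices, all of degree $2$. A vertex $v$ is a cut vertex if removing it disconnects $G$; it decomposes $G$ into $G_1=G(V_1)$ and $H=G(U)$ if $V(G)=V_1\cup U$, $V_1\cap U=\{v\}$, both induced subgraphs are connected, and no edge joins $V_1\setminus\{v\}$ to $U\setminus\{v\}$. A divisor is a function $V\to\mathbb{Z}$, $\deg(f)=\sum f(u)$; $\epsilon_v$ is the divisor with value $1$ at $v$ and $0$ elsewhere. Contraction: $f_{G/H}$ is the divisor on $G_1$ with $f_{G/H}(u)=f(u)$ for $u\in V_1\setminus\{v\}$, $f_{G/H}(v)=\sum_{u\in U}f(u)$. Zero: $f_{N(H)}$ is the divisor on $H$ with $f_{N(H)}(u)=f(u)$ for $u\in U\setminus\{v\}$ and $f_{N(H)}(v)=-\sum_{u\in U\setminus\{v\}}f(u)$. Laplacian $\Delta_X(u,u)=\deg(u)$, $\Delta_X(u,w)=-e(u,w)$ for $u\ne w$; $f\sim g$ on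 $X$ if $g=f+x\Delta_X$, $x$ integral. Effective: all values $\ge0$; L-effective: equivalent to an effective divisor. A degree-$0$ divisor on the cycle $H$ is good if it is L-effective on $H$, bad otherwise. The rank $\rho_X(f)$ on a graph $X$ is $-1$ if $f$ is not L-effective on $X$, otherwise the largest $r\ge0$ with $f-\lambda$ L-effective on $X$ for all effective $\lambda$ of degree $r$ on $X$. *)

(* Defs.v *)
From Stdlib Require Import ClassicalEpsilon.
From mathcomp Require Import all_boot all_order all_algebra.
Set Implicit Arguments. Unset Strict Implicit. Unset Printing Implicit Defensive.
Import Order.TTheory GRing.Theory Num.Theory.
Local Open Scope ring_scope.

(* A multigraph on the finite vertex type T is given by the edge multiplicity
   function e : T -> T -> nat (e u w = number of edges joining u and w). *)
Definition multigraph (T : finType) (e : T -> T -> nat) : Prop :=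
  (forall u w, e u w = e w u) /\ (forall u, e u u = 0%N).

Definition adj_in (T : finType) (e : T -> T -> nat) (W : {set T}) : rel T :=
  fun x y => [&& x \in W, y \in W & (0 < e x y)%N].

Definition connected_in (T : finType) (e : T -> T -> nat) (W : {set T}) : Prop :=
  W != set0 /\ forall x y, x \in W -> y \in W -> connect (adj_in e W) x y.

Definition deg_in (T : finType) (e : T -> T -> nat) (W : {set T}) (u : T) : nat :=
  (\sum_(w in W) e u w)%N.

Definition is_cycle (T : finType) (e : T -> T -> nat) (U : {set T}) : Prop :=
  connected_in e U /\ (2 <= #|U|)%N /\ forall u, u \in U -> deg_in e U u = 2%N.

Definition cut_vertex (T : finType) (e : T -> T -> nat) (v : T) : Prop :=
  ~ connected_in e ([set: T] :\ v).

Definition decomposes (T : finType) (e : T -> T -> nat) (v : T) (V1 U : {set T}) : Prop :=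
  [/\ V1 :|: U = [set: T], V1 :&: U = [set v], connected_in e V1, connected_in e U
    & forall x y, x \in V1 :\ v -> y \in U :\ v -> e x y = 0%N].

(* Divisors on an induced subgraph G(W) are functions T -> int; only their
   values on W matter. *)
Definition divisor (T : finType) := T -> int.

Definition deg_div (T : finType) (W : {set T}) (f : divisor T) : int :=
  \sum_(u in W) f u.

Definition eps (T : finType) (v : T) : divisor T := fun u => (u == v)%:Z.

Definition lap (T : finType) (e : T -> T -> nat) (W : {set T}) (x : T -> int) (u : T) : int :=
  (deg_in e W u)%:Z * x u - \sum_(w in W | w != u) (e w u)%:Z * x w.

Definition linequiv (T : finType) (e : T -> T -> nat) (W : {set T}) (f g : divisor T) : Prop :=
  exists x : T -> int, forall u, u \in W -> g u = f u + lap e W x u.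

Definition effective (T : finType) (W : {set T}) (f : divisor T) : Prop :=
  forall u, u \in W -> 0 <= f u.

Definition Leffective (T : finType) (e : T -> T -> nat) (W : {set T}) (f : divisor T) : Prop :=
  exists g, linequiv e W f g /\ effective W g.

Definition rank_ge (T : finType) (e : T -> T -> nat) (W : {set T}) (f : divisor T) (n : nat) : Prop :=
  forall lam : divisor T, effective W lam -> deg_div W lam = n%:Z ->
    Leffective e W (fun u => f u - lam u).

Definition is_rank (T : finType) (e : T -> T -> nat) (W : {set T}) (f : divisor T) (r : int) : Prop :=
  (~ Leffective e W f /\ r = -1)
  \/ (Leffective e W f /\ exists n : nat, r = n%:Z /\ rank_ge e W f n
        /\ forall m : nat, rank_ge e W f m -> (m <= n)%N).

Definition rho (T : finType) (e : T -> T -> nat) (W : {set T}) (f : divisor T) : int :=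
  epsilon (inhabits 0) (is_rank e W f).

Definition f_contr (T : finType) (U : {set T}) (v : T) (f : divisor T) : divisor T :=
  fun u => if u == v then \sum_(w in U) f w else f u.

Definition f_zero (T : finType) (U : {set T}) (v : T) (f : divisor T) : divisor T :=
  fun u => if u == v then - \sum_(w in U | w != v) f w else f u.

(* a degree-0 divisor on the cycle H = G(U) is good iff L-effective on H *)
Definition good (T : finType) (e : T -> T -> nat) (U : {set T}) (f : divisor T) : Prop :=
  Leffective e U f.

(* Main.v *)
Require Import Defs.
From Stdlib Require Import ClassicalEpsilon.
From mathcomp Require Import all_boot all_order all_algebra zify.
Import Order.TTheory GRing.Theory Num.Theory.
Local Open Scope ring_scope.
Set Implicit Arguments. Unset Strict Implicit. Unset Printing Implicit Defensive.

Lemma sumz_nat (T : finType) (P : pred T) (F : T -> nat) :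
  Posz (\sum_(i | P i) F i)%N = \sum_(i | P i) (F i)%:Z.
Proof. exact: (big_morph Posz PoszD (erefl _)). Qed.

Lemma lapE (T : finType) (e : T -> T -> nat) (W : {set T}) x u :
  multigraph e ->
  lap e W x u = \sum_(w in W) (e u w)%:Z * (x u - x w).
Proof.
case=> Hs H0; rewrite /lap /deg_in sumz_nat mulr_suml.
have -> : \sum_(w in W | w != u) (e w u)%:Z * x w = \sum_(w in W) (e u w)%:Z * x w.
  symmetry; rewrite (bigID (pred1 u)) /= big1 ?add0r; last first.
    by move=> w /andP[_ /eqP ->]; rewrite H0 mul0r.
  by apply: eq_bigr => w _; rewrite Hs.
by rewrite -sumrB; apply: eq_bigr => w _; rewrite mulrBr.
Qed.

Lemma lap_add (T : finType) (e : T -> T -> nat) (W : {set T}) x y u :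
  multigraph e ->
  lap e W (fun w => x w + y w) u = lap e W x u + lap e W y u.
Proof.
move=> He; rewrite !lapE // -big_split /=; apply: eq_bigr => w _.
by rewrite -mulrDr; congr (_ * _); rewrite opprD addrACA.
Qed.

Lemma lap_opp (T : finType) (e : T -> T -> nat) (W : {set T}) x u :
  multigraph e ->
  lap e W (fun w => - x w) u = - lap e W x u.
Proof.
move=> He; rewrite !lapE // -sumrN; apply: eq_bigr => w _.
by rewrite -mulrN opprB opprK addrC.
Qed.

Lemma lap_shift (T : finType) (e : T -> T -> nat) (W : {set T}) x c u :
  multigraph e ->
  lap e W (fun w => x w + c) u = lap e W x u.
Proof.
move=> He; rewrite !lapE //; apply: eq_bigr => w _.
by rewrite opprD addrACA subrr addr0.
Qed.

Lemma antisym0 (T : finType) (e : T -> T -> nat) (S : {set T}) (x : T -> int) :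
  multigraph e ->
  \sum_(a in S) \sum_(b in S) (e a b)%:Z * (x a - x b) = 0.
Proof.
case=> Hs _.
have -> : \sum_(a in S) \sum_(b in S) (e a b)%:Z * (x a - x b) =
   \sum_(a in S) \sum_(b in S) (e a b)%:Z * x a - \sum_(a in S) \sum_(b in S) (e a b)%:Z * x b.
  by rewrite -sumrB; apply: eq_bigr => a _; rewrite -sumrB; apply: eq_bigr => b _; rewrite mulrBr.
rewrite [X in _ - X]exchange_big /=; apply/eqP; rewrite subr_eq0; apply/eqP.
by apply: eq_bigr => a _; apply: eq_bigr => b _; rewrite Hs.
Qed.

Lemma lap_sum_set (T : finType) (e : T -> T -> nat) (W S : {set T}) x :
  multigraph e -> S \subset W ->
  \sum_(u in S) lap e W x u = \sum_(a in S) \sum_(b in W :\: S) (e a b)%:Z * (x a - x b).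
Proof.
move=> He HS.
have -> : \sum_(u in S) lap e W x u = \sum_(a in S) (\sum_(b in S) (e a b)%:Z * (x a - x b)
   + \sum_(b in W :\: S) (e a b)%:Z * (x a - x b)).
  apply: eq_bigr => a _; rewrite lapE //.
  rewrite (big_setID S) /=; congr (_ + _).
  by apply: eq_bigl => b; rewrite in_setI andbC; case: (boolP (b \in S)) => // /(subsetP HS) ->.
by rewrite big_split /= antisym0 // add0r.
Qed.

Lemma lap_sum0 (T : finType) (e : T -> T -> nat) (W : {set T}) x :
  multigraph e -> \sum_(u in W) lap e W x u = 0.
Proof.
move=> He; rewrite lap_sum_set // setDv; apply: big1 => a _; exact: big_set0.
Qed.

Lemma lap0 (T : finType) (e : T -> T -> nat) (W : {set T}) u :
  multigraph e -> lap e W (fun _ => 0) u = 0.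
Proof. by move=> He; rewrite lapE //; apply: big1 => w _; rewrite subrr mulr0. Qed.

Lemma Leff_ext (T : finType) (e : T -> T -> nat) (W : {set T}) (f g : divisor T) :
  (forall u, u \in W -> f u = g u) -> Leffective e W f -> Leffective e W g.
Proof.
move=> Hfg [E [[x Hx] HE]]; exists E; split=> //; exists x => u Hu.
by rewrite (Hx u Hu) Hfg.
Qed.

Lemma Leff_add_eff (T : finType) (e : T -> T -> nat) (W : {set T}) (f h : divisor T) :
  multigraph e -> Leffective e W f -> effective W h ->
  Leffective e W (fun u => f u + h u).
Proof.
move=> He [E [[x Hx] HE]] Hh; exists (fun u => E u + h u); split.
  by exists x => u Hu /=; rewrite (Hx u Hu) addrAC.
by move=> u Hu; rewrite addr_ge0 ?HE ?Hh.
Qed.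

Lemma eff_Leff (T : finType) (e : T -> T -> nat) (W : {set T}) (f : divisor T) :
  multigraph e -> effective W f -> Leffective e W f.
Proof.
move=> He Hf; exists f; split => //; exists (fun _ => 0) => u Hu.
by rewrite lap0 // addr0.
Qed.

Lemma Leff_deg (T : finType) (e : T -> T -> nat) (W : {set T}) (f : divisor T) :
  multigraph e -> Leffective e W f -> 0 <= \sum_(u in W) f u.
Proof.
move=> He [E [[x Hx] HE]].
have -> : \sum_(u in W) f u = \sum_(u in W) E u.
  rewrite [RHS](eq_bigr (fun u => f u + lap e W x u)); last by move=> u Hu; rewrite (Hx u Hu).
  by rewrite big_split /= lap_sum0 // addr0.
by apply: sumr_ge0 => u Hu; apply: HE.
Qed.

Lemma Leff_equiv0 (T : finType) (e : T -> T -> nat) (W : {set T}) (f h : divisor T) :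
  multigraph e -> (exists x, forall u, u \in W -> f u + lap e W x u = 0) ->
  (Leffective e W (fun u => f u + h u) <-> Leffective e W h).
Proof.
move=> He [x Hx]; split.
  move=> [E [[y Hy] HE]]; exists E; split=> //.
  exists (fun u => y u - x u) => u Hu.
  have := Hx u Hu; have := Hy u Hu; rewrite /= lap_add // lap_opp //; lia.
move=> [E [[y Hy] HE]]; exists E; split=> //.
exists (fun u => x u + y u) => u Hu.
have := Hx u Hu; have := Hy u Hu; rewrite /= lap_add //; lia.
Qed.

Lemma sum_eps (T : finType) (W : {set T}) (w0 : T) (c : int) :
  w0 \in W -> \sum_(u in W) c * eps w0 u = c.
Proof.
move=> Hw; rewrite (bigD1 w0) //= big1 ?addr0; first by rewrite /eps eqxx mulr1.
by move=> u /andP[_ Hu]; rewrite /eps (negbTE Hu) mulr0.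
Qed.

Lemma eps_ge0 (T : finType) (w0 u : T) : 0 <= eps w0 u.
Proof. by rewrite /eps. Qed.

Lemma neps_ge0 (T : finType) (k : nat) (w0 u : T) : 0 <= k%:Z * eps w0 u.
Proof. by rewrite mulr_ge0 // eps_ge0. Qed.

Lemma rank_ge_mono (T : finType) (e : T -> T -> nat) (W : {set T}) (f : divisor T) n m w0 :
  multigraph e -> w0 \in W -> rank_ge e W f n -> (m <= n)%N -> rank_ge e W f m.
Proof.
move=> He Hw Hn Hmn lam Hl Hd.
have H := Hn (fun u => lam u + (n - m)%N%:Z * eps w0 u).
have /H {H} : effective W (fun u => lam u + (n - m)%N%:Z * eps w0 u).
  by move=> u Hu; rewrite addr_ge0 ?Hl ?neps_ge0.
have /[swap]/[apply] : deg_div W (fun u => lam u + (n - m)%N%:Z * eps w0 u) = n%:Z.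
  rewrite /deg_div big_split /= sum_eps //; move: Hd; rewrite /deg_div => ->; lia.
move=> H; have := Leff_add_eff He H (h := fun u => (n - m)%N%:Z * eps w0 u).
move/(_ (fun u Hu => neps_ge0 _ _ _)).
by apply: Leff_ext => u _; lia.
Qed.

Lemma rank_ge0 (T : finType) (e : T -> T -> nat) (W : {set T}) (f : divisor T) :
  multigraph e -> rank_ge e W f 0 <-> Leffective e W f.
Proof.
move=> He; split.
  move=> H; have := H (fun _ => 0); rewrite /deg_div big1 //; move/(_ (fun _ _ => lexx 0) erefl).
  by apply: Leff_ext => u _; rewrite subr0.
move=> Hf lam Hl Hd; apply: Leff_ext Hf => u Hu.
have : lam u == 0.
  move: Hd; rewrite /deg_div => /eqP; rewrite psumr_eq0 //.
  by move/allP/(_ u); rewrite mem_index_enum Hu /=; move/(_ isT).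
by move/eqP->; rewrite subr0.
Qed.

Lemma rank_ge_Leff (T : finType) (e : T -> T -> nat) (W : {set T}) (f : divisor T) n w0 :
  multigraph e -> w0 \in W -> rank_ge e W f n -> Leffective e W f.
Proof.
move=> He Hw Hn; apply/(rank_ge0 _ _ He); exact: (rank_ge_mono He Hw Hn (leq0n n)).
Qed.

Lemma rank_ge_bound (T : finType) (e : T -> T -> nat) (W : {set T}) (f : divisor T) n w0 :
  multigraph e -> w0 \in W -> rank_ge e W f n -> n%:Z <= \sum_(u in W) f u.
Proof.
move=> He Hw Hn.
have := Hn (fun u => n%:Z * eps w0 u) (fun u _ => neps_ge0 _ _ _).
rewrite /deg_div sum_eps // => /(_ erefl) /(Leff_deg He).
by rewrite sumrB sum_eps // subr_ge0.
Qed.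

Lemma ex_max_classic (P : nat -> Prop) B :
  P 0%N -> (forall n, P n -> (n <= B)%N) -> exists n, P n /\ forall m, P m -> (m <= n)%N.
Proof.
elim: B => [|B IH] H0 Hb.
  by exists 0%N; split => // m /Hb.
case: (classic (P B.+1)) => HB.
  by exists B.+1; split.
apply: IH => // n Hn; have := Hb n Hn; rewrite leq_eqVlt => /orP[/eqP Hn1|//].
by rewrite Hn1 in Hn.
Qed.

Lemma rho_spec (T : finType) (e : T -> T -> nat) (W : {set T}) (f : divisor T) w0 :
  multigraph e -> w0 \in W -> is_rank e W f (rho e W f).
Proof.
move=> He Hw; apply: epsilon_spec.
case: (classic (Leffective e W f)) => Hf; last by exists (-1); left.
have [n [Hn Hmax]] : exists n, rank_ge e W f n /\ forall m, rank_ge e W f m -> (m <= n)%N.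
  apply: (ex_max_classic (B := absz (\sum_(u in W) f u))); first by apply/rank_ge0.
  move=> n /(rank_ge_bound He Hw); lia.
by exists n%:Z; right; split => //; exists n.
Qed.

Lemma is_rank_uniq (T : finType) (e : T -> T -> nat) (W : {set T}) (f : divisor T) r1 r2 :
  is_rank e W f r1 -> is_rank e W f r2 -> r1 = r2.
Proof.
case=> [[Hn1 E1]|[Hf1 [n1 [E1 [Hn1 Hm1]]]]]; case=> [[Hn2 E2]|[Hf2 [n2 [E2 [Hn2 Hm2]]]]];
  subst => //; try by exfalso; auto.
by congr Posz; apply/eqP; rewrite eqn_leq (Hm2 _ Hn1) (Hm1 _ Hn2).
Qed.

Lemma dec_facts (T : finType) (e : T -> T -> nat) (v : T) (V1 U : {set T}) :
  decomposes e v V1 U ->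
  [/\ v \in V1, v \in U, forall u, (u \notin V1) = (u \in U) && (u != v) &
      forall u, u \in U -> u \in V1 -> u = v].
Proof.
case=> HU HI _ _ _.
have HvI : v \in V1 :&: U by rewrite HI set11.
move: (HvI); rewrite in_setI => /andP[Hv1 Hv2]; split => //.
- move=> u; apply/idP/idP.
    move=> Hu; have : u \in V1 :|: U by rewrite HU.
    rewrite in_setU (negbTE Hu) /= => ->; apply/eqP => Huv; subst; by rewrite Hv1 in Hu.
  case/andP=> Hu Huv; apply/negP => Hu1.
  have : u \in V1 :&: U by rewrite in_setI Hu Hu1.
  by rewrite HI in_set1 (negbTE Huv).
- move=> u Hu Hu1; have : u \in V1 :&: U by rewrite in_setI Hu Hu1.
  by rewrite HI in_set1 => /eqP.
Qed.

Lemma sum_splitT (T : finType) (e : T -> T -> nat) (v : T) (V1 U : {set T}) (h : T -> int) :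
  decomposes e v V1 U ->
  \sum_(w in [set: T]) h w = \sum_(w in V1) h w + \sum_(w in U | w != v) h w.
Proof.
move=> /dec_facts [_ _ Hc _].
rewrite (big_setID V1) /= setTI; congr (_ + _).
by apply: eq_bigl => w; rewrite setTD in_setC Hc.
Qed.

Lemma sum_Dv (T : finType) (W : {set T}) (v : T) (h : T -> int) :
  v \in W -> \sum_(w in W) h w = h v + \sum_(w in W | w != v) h w.
Proof. by move=> Hv; rewrite (bigD1 v). Qed.

Lemma lap_loc (T : finType) (e : T -> T -> nat) (W : {set T}) x y u :
  multigraph e -> (forall w, w \in W -> x w = y w) -> u \in W ->
  lap e W x u = lap e W y u.
Proof.
move=> He Hxy Hu; rewrite !lapE //; apply: eq_bigr => w Hw.
by rewrite !Hxy.
Qed.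

Lemma lapT_v (T : finType) (e : T -> T -> nat) (v : T) (V1 U : {set T}) x :
  multigraph e -> decomposes e v V1 U ->
  lap e [set: T] x v = lap e V1 x v + lap e U x v.
Proof.
move=> He Hd; have [Hv1 Hv2 _ _] := dec_facts Hd.
rewrite !lapE // (sum_splitT _ Hd) (sum_Dv _ Hv2).
by rewrite subrr mulr0 add0r.
Qed.

Lemma lapT_V1 (T : finType) (e : T -> T -> nat) (v : T) (V1 U : {set T}) x u :
  multigraph e -> decomposes e v V1 U -> u \in V1 -> u != v ->
  lap e [set: T] x u = lap e V1 x u.
Proof.
move=> He Hd Hu Huv; have Hd' := Hd; case: Hd' => _ _ _ _ Hz.
rewrite !lapE // (sum_splitT _ Hd) [X in _ + X = _]big1 ?addr0 // => w /andP[Hw Hwv].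
by rewrite Hz ?mul0r // in_setD1 ?Huv ?Hwv.
Qed.

Lemma lapT_U (T : finType) (e : T -> T -> nat) (v : T) (V1 U : {set T}) x u :
  multigraph e -> decomposes e v V1 U -> u \in U -> u != v ->
  lap e [set: T] x u = lap e U x u.
Proof.
move=> He Hd Hu Huv; have Hd' := Hd; case: Hd' => _ _ _ _ Hz.
have [Hv1 Hv2 _ _] := dec_facts Hd; have [Hs _] := He.
rewrite !lapE // (sum_splitT _ Hd) (sum_Dv _ Hv1) (sum_Dv _ Hv2).
rewrite [X in _ + X + _]big1 ?addr0 // => w /andP[Hw Hwv].
by rewrite Hs Hz ?mul0r // in_setD1 ?Huv ?Hwv.
Qed.

Lemma split_Leff (T : finType) (e : T -> T -> nat) (v : T) (V1 U : {set T}) (F : divisor T) :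
  multigraph e -> decomposes e v V1 U ->
  Leffective e [set: T] F <->
  exists k, Leffective e V1 (fun u => if u == v then F v - k else F u) /\
            Leffective e U (fun u => if u == v then k else F u).
Proof.
move=> He Hd; have [Hv1 Hv2 Hc HUV] := dec_facts Hd; split.
  move=> [E [[x Hx] HE]]; exists (- lap e U x v); split.
    exists E; split; last by move=> u Hu; apply: HE; rewrite in_setT.
    exists x => u Hu; have := Hx u (in_setT u).
    case: (eqVneq u v) => [->|Huv].
      by rewrite (lapT_v _ He Hd) => ->; rewrite opprK; lia.
    by rewrite (lapT_V1 _ He Hd Hu Huv).
  exists (fun u => if u == v then 0 else E u); split; last first.
    by move=> u Hu; case: ifP => // _; apply: HE; rewrite in_setT.
  exists x => u Hu; have := Hx u (in_setT u).
  case: (eqVneq u v) => [->|Huv] /=; first by rewrite addNr.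
  by rewrite (lapT_U _ He Hd Hu Huv).
move=> [k [[E1 [[x1 H1] HE1]] [E2 [[x2 H2] HE2]]]].
pose c := x1 v - x2 v.
pose x := fun u => if u \in V1 then x1 u else x2 u + c.
have L1 : forall u, u \in V1 -> lap e V1 x u = lap e V1 x1 u.
  by move=> u Hu; apply: lap_loc => // w Hw; rewrite /x Hw.
have L2 : forall u, u \in U -> lap e U x u = lap e U x2 u.
  move=> u Hu; rewrite -(@lap_shift _ e U x2 c u He); apply: lap_loc => // w Hw.
  rewrite /x; case: ifP => // Hw1; rewrite (HUV w Hw Hw1) /c; lia.
exists (fun u => if u == v then E1 v + E2 v else if u \in V1 then E1 u else E2 u); split.
  exists x => u _ /=.
  case: (eqVneq u v) => [->|Huv].
    rewrite (lapT_v _ He Hd) L1 // L2 // (H1 v Hv1) (H2 v Hv2) !eqxx; lia.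
  case: ifP => Hu1.
    by rewrite (lapT_V1 _ He Hd Hu1 Huv) L1 // (H1 u Hu1) (negbTE Huv).
  have Hu2 : u \in U by move: (negbT Hu1); rewrite Hc => /andP[].
  by rewrite (lapT_U _ He Hd Hu2 Huv) L2 // (H2 u Hu2) (negbTE Huv).
move=> u _; case: ifP => _; first by rewrite addr_ge0 ?HE1 ?HE2.
case: ifP => Hu1; first by apply: HE1.
by apply: HE2; move: (negbT Hu1); rewrite Hc => /andP[].
Qed.

Lemma exmax (T : finType) (W : {set T}) (h : T -> int) u0 : u0 \in W ->
  exists2 u, u \in W & forall w, w \in W -> h w <= h u.
Proof.
move=> Hu; case: (@arg_maxP _ _ _ u0 (mem W) h Hu) => u Hu1 Hmax.
by exists u.
Qed.

Definition dS (T : finType) (e : T -> T -> nat) (U S : {set T}) : int :=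
  \sum_(a in S) \sum_(b in U :\: S) (e a b)%:Z.

Lemma sum_D1_compl (T : finType) (U S : {set T}) u (h : T -> int) :
  u \in U -> u \in S -> \sum_(b in U :\: (S :\ u)) h b = h u + \sum_(b in U :\: S) h b.
Proof.
move=> Hu HuS; rewrite (bigD1 u) /=; last by rewrite !inE eqxx Hu.
congr (_ + _); apply: eq_bigl => b; rewrite !inE.
by case: (eqVneq b u) => [->|] /=; [rewrite HuS andbF | rewrite andbT].

Qed.

Lemma deg_split (T : finType) (e : T -> T -> nat) (U S : {set T}) u :
  multigraph e -> S \subset U -> u \in S ->
  (deg_in e U u)%:Z = \sum_(b in U :\: S) (e u b)%:Z + \sum_(b in S :\ u) (e u b)%:Z.
Proof.
move=> [Hs H0] HS Hu; rewrite /deg_in sumz_nat (big_setID S) /= addrC; congr (_ + _).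
have -> : U :&: S = S by apply/setIidPr.
by rewrite (bigD1 u) //= H0 add0r; apply: eq_bigl => b; rewrite !inE andbC.
Qed.

Lemma dS_step (T : finType) (e : T -> T -> nat) (U S : {set T}) u :
  multigraph e -> (forall u, u \in U -> deg_in e U u = 2%N) -> S \subset U -> u \in S ->
  dS e U S = dS e U (S :\ u) + 2 * \sum_(b in U :\: S) (e u b)%:Z - 2.
Proof.
move=> He Hdeg HS Hu; have [Hs H0] := He.
have HuU : u \in U by apply: (subsetP HS).
have Hd := deg_split He HS Hu; rewrite Hdeg // in Hd.
rewrite /dS (bigD1 u) //=.
have -> : \sum_(a in S :\ u) \sum_(b in U :\: (S :\ u)) (e a b)%:Z =
          \sum_(a in S :\ u) (e u a)%:Z + \sum_(a in S :\ u) \sum_(b in U :\: S) (e a b)%:Z.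
  rewrite -big_split /=; apply: eq_bigr => a _; rewrite sum_D1_compl // Hs //.
rewrite (@eq_bigl _ _ _ _ _ (fun i => (i \in S) && (i != u)) (fun i => i \in S :\ u)); last first.
  by move=> i; rewrite !inE andbC.
set Y := \sum_(i in S :\ u) _.
set X := \sum_(b in U :\: S) _.
set Z := \sum_(b in S :\ u) _.
have Hd' : Posz 2 = X + Z by exact: Hd.
clearbody X Y Z; lia.
Qed.

Lemma dS_even (T : finType) (e : T -> T -> nat) (U : {set T}) :
  multigraph e -> (forall u, u \in U -> deg_in e U u = 2%N) ->
  forall S : {set T}, S \subset U -> exists k : int, dS e U S = 2 * k.
Proof.
move=> He Hdeg S; move Hn: #|S| => n; elim: n S Hn => [|n IH] S Hn HS.
  move/eqP: Hn; rewrite cards_eq0 => /eqP ->; exists 0; rewrite /dS big_set0; lia.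
have : (0 < #|S|)%N by rewrite Hn.
case/card_gt0P => u Hu.
have Hc : #|S :\ u| = n by move: Hn; rewrite (cardsD1 u) Hu add1n => -[].
have Hsub : S :\ u \subset U by apply: subset_trans (subsetDl S [set u]) HS.
have [k Hk] := IH _ Hc Hsub.
exists (k + \sum_(b in U :\: S) (e u b)%:Z - 1); rewrite (dS_step He Hdeg HS Hu) Hk; lia.
Qed.

Lemma boundary (T : finType) (e : T -> T -> nat) (U Z : {set T}) z y :
  connected_in e U -> z \in Z -> Z \subset U -> y \in U -> y \notin Z ->
  exists a b, [/\ a \in Z, b \in U :\: Z & (0 < e a b)%N].
Proof.
move=> [_ Hc] Hz HZ Hy Hny.
case: (classic (exists a b, [/\ a \in Z, b \in U :\: Z & (0 < e a b)%N])) => // Hno.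
have Hp : forall p x, x \in Z -> path (adj_in e U) x p -> last x p \in Z.
  elim=> [|w p IH] x Hx //= /andP[Ha Hp]; apply: IH Hp.
  move: Ha; rewrite /adj_in => /and3P[_ Hw He].
  apply/negPn/negP => Hnw; apply: Hno; exists x, w; split => //.
  by rewrite in_setD Hnw Hw.
have /connectP[p Hpath Hlast] := Hc z y (subsetP HZ z Hz) Hy.
by move: (Hp p z Hz Hpath); rewrite -Hlast (negbTE Hny).
Qed.

Lemma sum_eps1 (T : finType) (W : {set T}) (w0 : T) :
  w0 \in W -> \sum_(u in W) eps w0 u = 1.
Proof.
move=> Hw; rewrite -[RHS](sum_eps 1 Hw); apply: eq_bigr => u _; by rewrite mul1r.
Qed.

Lemma sum_eps_le1 (T : finType) (W : {set T}) (w0 : T) :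
  \sum_(u in W) eps w0 u <= 1.
Proof.
case: (boolP (w0 \in W)) => Hw; first by rewrite sum_eps1.
rewrite big1 // => u Hu; rewrite /eps; case: eqP => // Heq; subst.
by rewrite Hu in Hw.
Qed.

Lemma cycle_not_equiv (T : finType) (e : T -> T -> nat) (U : {set T}) v w :
  multigraph e -> is_cycle e U -> v \in U -> w \in U -> w != v ->
  ~ Leffective e U (fun u => eps v u - eps w u).
Proof.
move=> He [Hconn [H2 Hdeg]] Hv Hw Hwv [E [[x Hx] HE]].
have HsD : \sum_(u in U) (eps v u - eps w u) = 0 by rewrite sumrB !sum_eps1 // subrr.
have HE0 : forall u, u \in U -> E u = 0.
  have : \sum_(u in U) E u = 0.
    rewrite (eq_bigr (fun u => (eps v u - eps w u) + lap e U x u)); last by move=> u Hu; rewrite (Hx u Hu).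
    by rewrite big_split /= HsD lap_sum0 // addr0.
  by move/psumr_eq0P => H u Hu; apply: H => //; apply: HE.
have Hl : forall u, u \in U -> lap e U x u = eps w u - eps v u.
  by move=> u Hu; have := Hx u Hu; rewrite HE0 //; lia.
have [u0 Hu0 Hmax] := exmax x Hv.
pose S := [set u in U | x u == x u0].
case: (classic (exists2 y, y \in U & x y != x u0)) => [[y Hy Hny]|Hall].
  have HS : S \subset U by apply/subsetP => u; rewrite inE => /andP[].
  have Hu0S : u0 \in S by rewrite inE Hu0 eqxx.
  have HyS : y \notin S by rewrite inE Hy.
  have [a [b [Ha Hb Hab]]] := boundary Hconn Hu0S HS Hy HyS.
  have Hsum := lap_sum_set x He HS.
  have H1 : dS e U S <= \sum_(u in S) lap e U x u.
    rewrite Hsum /dS; apply: ler_sum => a' Ha'; apply: ler_sum => b' Hb'.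
    move: Ha' Hb'; rewrite !inE => /andP[_ /eqP ->] /andP[Hb1 Hb2].
    rewrite Hb2 /= in Hb1; have Hlt : x b' < x u0 by rewrite lt_neqAle Hb1 Hmax.
    rewrite -[X in X <= _]mulr1; apply: ler_wpM2l => //.
    by rewrite lerBrDr addrC lezD1.
  have H2' : 1 <= dS e U S.
    rewrite /dS (bigD1 a) //= (bigD1 b) //=.
    have H1e : 1 <= (e a b)%:Z by rewrite lez_nat.
    apply: le_trans H1e _; rewrite -addrA lerDl.
    by apply: addr_ge0; apply: sumr_ge0 => // i _; apply: sumr_ge0.
  have H3 : \sum_(u in S) lap e U x u <= 1.
    rewrite (eq_bigr (fun u => eps w u - eps v u)); last by move=> u Hu; apply: Hl; apply: (subsetP HS).
    rewrite sumrB; have := sum_eps_le1 S w.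
    have : 0 <= \sum_(u in S) eps v u by apply: sumr_ge0 => u _; apply: eps_ge0.
    move=> HB HA; apply: (le_trans _ HA). rewrite gerBl. exact: HB.
  have [k Hk] := dS_even He Hdeg HS.
  lia.
have := Hl w Hw; rewrite lapE // big1; last first.
  move=> b Hb; have : x b = x u0.
    by case: (eqVneq (x b) (x u0)) => // Hn; exfalso; apply: Hall; exists b.
  have : x w = x u0.
    by case: (eqVneq (x w) (x u0)) => // Hn; exfalso; apply: Hall; exists w.
  by move=> -> ->; rewrite subrr mulr0.
by rewrite /eps eqxx (negbTE Hwv).
Qed.

Lemma lap_scale (T : finType) (e : T -> T -> nat) (W : {set T}) x (c : int) u :
  multigraph e -> lap e W (fun w => c * x w) u = c * lap e W x u.
Proof.
move=> He; rewrite !lapE // mulr_sumr; apply: eq_bigr => w _.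
by rewrite -mulrBr mulrCA.
Qed.

Lemma lap_ind_in (T : finType) (e : T -> T -> nat) (U S : {set T}) u :
  multigraph e -> u \in S ->
  lap e U (fun b => (b \in S)%:Z) u = \sum_(b in U :\: S) (e u b)%:Z.
Proof.
move=> He Hu; rewrite lapE // (big_setID S) /= big1 ?add0r; last first.
  by move=> b; rewrite in_setI => /andP[_ ->]; rewrite Hu subrr mulr0.
by apply: eq_bigr => b; rewrite in_setD Hu => /andP[/negbTE -> _]; rewrite subr0 mulr1.
Qed.

Lemma lap_ind_out (T : finType) (e : T -> T -> nat) (U S : {set T}) u :
  multigraph e -> u \notin S ->
  lap e U (fun b => (b \in S)%:Z) u = - \sum_(b in U :&: S) (e u b)%:Z.
Proof.
move=> He Hu; rewrite lapE // (big_setID S) /= [X in _ + X]big1 ?addr0; last first.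
  by move=> b; rewrite in_setD => /andP[/negbTE -> _]; rewrite (negbTE Hu) subrr mulr0.
rewrite -sumrN; apply: eq_bigr => b; rewrite in_setI => /andP[_ ->].
by rewrite (negbTE Hu) sub0r mulrN1.
Qed.

Lemma ex_min_classic (P : nat -> Prop) :
  (exists n, P n) -> exists n, P n /\ forall m, P m -> (n <= m)%N.
Proof.
move=> [n Hn]; apply: NNPP => Hno.
have H : forall k m, (m <= k)%N -> ~ P m.
  elim=> [|k IH] m Hm Pm.
    apply: Hno; exists m; split => // m' _; move: Hm; rewrite leqn0 => /eqP ->; done.
  apply: Hno; exists m; split => // m' Pm'; rewrite leqNgt; apply/negP => Hlt.
  by apply: (IH m') => //; rewrite -ltnS; apply: leq_trans Hlt Hm.
exact: (H n n (leqnn n) Hn).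
Qed.

Lemma sum_single_le (T : finType) (W : {set T}) (h : T -> int) b :
  b \in W -> (forall i, i \in W -> 0 <= h i) -> h b <= \sum_(i in W) h i.
Proof.
move=> Hb Hh; rewrite (bigD1 b) //= lerDl; apply: sumr_ge0 => i /andP[Hi _]; exact: Hh.
Qed.

Lemma sum_subset_le (T : finType) (U Z : {set T}) (h : T -> int) :
  (forall i, i \in U -> 0 <= h i) -> \sum_(i in U :&: Z) h i <= \sum_(i in U) h i.
Proof.
move=> Hh; rewrite [X in _ <= X](big_setID Z) /= lerDl; apply: sumr_ge0 => i.
by rewrite in_setD => /andP[_]; apply: Hh.
Qed.

Lemma arith1 (L I : int) : 0 <= L -> 1 <= I -> 1 <= 3 * L + I.
Proof. lia. Qed.
Lemma arith2 (L I : int) : 1 <= L -> -2 <= I -> 1 <= 3 * L + I.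
Proof. lia. Qed.
Lemma arith3 (L I : int) : 0 <= L -> 0 <= I -> 0 <= 3 * L + I.
Proof. lia. Qed.

Lemma pump (T : finType) (e : T -> T -> nat) (U : {set T}) v :
  multigraph e -> is_cycle e U -> v \in U ->
  exists x, forall u, u \in U :\ v -> 1 <= lap e U x u.
Proof.
move=> He [Hconn [H2 Hdeg]] Hv.
have Hclaim : forall n, (n <= #|U :\ v|)%N -> exists S : {set T},
    [/\ S \subset U :\ v, #|S| = n & exists x, (forall u, u \in S -> 1 <= lap e U x u) /\
                                          (forall u, u \in U :\ v -> 0 <= lap e U x u)].
  elim=> [|n IH] Hn.
    exists set0; split; [exact: sub0set | by rewrite cards0 | ].
    by exists (fun _ => 0); split => u Hu; [rewrite inE in Hu | rewrite lap0].
  have [S [HS HcS [x [Hx1 Hx0]]]] := IH (ltnW Hn).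
  have [y Hy] : exists y, y \in (U :\ v) :\: S.
    apply: NNPP => Hno.
    have : U :\ v \subset S.
      apply/subsetP => u Hu; apply/negPn/negP => Hu'; apply: Hno; exists u.
      by rewrite in_setD Hu Hu'.
    by move/subset_leq_card; rewrite HcS; move: Hn; lia.
  set Z := (U :\ v) :\: S.
  have HZU : Z \subset U by apply: subset_trans (subsetDl _ _) (subsetDl _ _).
  have HvZ : v \notin Z by rewrite !inE eqxx andbF.
  have [a [b [Ha Hb Hab]]] := boundary Hconn Hy HZU Hv HvZ.
  have HaZ := Ha; move: Ha; rewrite !inE => /andP[HaS /andP[Hav HaU]].
  exists (a |: S); split.
  - by rewrite subUset sub1set !inE Hav HaU HS.
  - by rewrite cardsU1 (negbTE HaS) HcS.
  pose x' := fun u => 3 * x u + (u \in Z)%:Z.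
  have Hl : forall u, lap e U x' u = 3 * lap e U x u + lap e U (fun b => (b \in Z)%:Z) u.
    by move=> u; rewrite /x' lap_add // lap_scale.
  have Hin : forall u, u \in Z -> 0 <= lap e U (fun b => (b \in Z)%:Z) u.
    by move=> u Hu; rewrite lap_ind_in //; apply: sumr_ge0.
  have Hout : forall u, u \in U -> u \notin Z -> -2 <= lap e U (fun b => (b \in Z)%:Z) u.
    move=> u Hu HuZ; rewrite lap_ind_out // lerN2.
    have <- : (deg_in e U u)%:Z = 2 by rewrite Hdeg.
    by rewrite /deg_in sumz_nat; apply: sum_subset_le.
  exists x'; split.
  - move=> u; rewrite in_setU1 => /orP[/eqP ->|HuS].
      rewrite Hl; have : 1 <= lap e U (fun b0 => (b0 \in Z)%:Z) a.
        rewrite lap_ind_in //; apply: (le_trans _ (sum_single_le (h := fun b0 => (e a b0)%:Z) Hb _)) => //=.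
      have : 0 <= lap e U x a by apply: Hx0; rewrite !inE Hav HaU.
      by move=> Ha1 Ha2; apply: arith1.
    have HuU : u \in U by move: (subsetP HS u HuS); rewrite !inE => /andP[].
    have HuZ : u \notin Z by rewrite !inE HuS.
    by rewrite Hl; apply: arith2; [exact: Hx1 | exact: Hout].
  - move=> u Hu; rewrite Hl; have Hx0u := Hx0 u Hu.
    have HuU : u \in U by move: Hu; rewrite in_setD1 => /andP[].
    case: (boolP (u \in Z)) => HuZ; first by apply: arith3 => //; exact: Hin.
    have HuS : u \in S by move: HuZ; rewrite in_setD Hu andbT negbK.
    apply: (le_trans ler01); apply: arith2; [exact: Hx1 | exact: Hout].
have [S [HS HcS [x [Hx1 _]]]] := Hclaim _ (leqnn _).
have HSe : S = U :\ v by apply/eqP; rewrite eqEcard HS HcS leqnn.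
by exists x; rewrite -HSe.
Qed.

Lemma sum_single_ge (T : finType) (W : {set T}) (h : T -> int) b :
  b \in W -> (forall i, i \in W -> h i <= 0) -> \sum_(i in W) h i <= h b.
Proof.
move=> Hb Hh; rewrite (bigD1 b) //= gerDl; apply: sumr_le0 => i /andP[Hi _]; exact: Hh.
Qed.

Lemma arith4 (E d : int) : 1 <= E -> d <= 0 -> E * d <= d.
Proof. move=> H1 H2; nia. Qed.
Lemma arith5 (A B P Y xa xb t : int) :
  0 <= A + B -> A <= P -> B <= Y -> Y <= xa - xb -> t <= xb -> t - P <= xa.
Proof. lia. Qed.

Lemma bound_step (T : finType) (e : T -> T -> nat) (U : {set T}) v (D : divisor T) x (t : int) y :
  multigraph e -> connected_in e U -> v \in U -> x v = 0 -> t <= 0 ->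
  (forall u, u \in U :\ v -> 0 <= D u + lap e U x u) ->
  y \in U -> x y < t ->
  exists2 a, a \in U & (x a < t) && (t - \sum_(u in U) `|D u| <= x a).
Proof.
move=> He Hconn Hv Hxv Ht Hfeas Hy Hxy.
set Z := [set u in U | x u < t].
have HZU : Z \subset U by apply/subsetP => u; rewrite inE => /andP[].
have HyZ : y \in Z by rewrite inE Hy Hxy.
have HvZ : v \notin Z by rewrite inE Hv Hxv /= -leNgt.
have [a [b [Ha Hb Hab]]] := boundary Hconn HyZ HZU Hv HvZ.
move: (Ha); rewrite inE => /andP[HaU Hat].
move: (Hb); rewrite in_setD inE => /andP[Hbn HbU]; rewrite HbU /= -leNgt in Hbn.
exists a => //; rewrite Hat /=.
have HZv : Z \subset U :\ v.
  apply/subsetP => u Hu; rewrite in_setD1 (subsetP HZU u Hu) andbT.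
  by apply/eqP => Huv; subst; rewrite Hu in HvZ.
have H1 : 0 <= \sum_(u in Z) D u + \sum_(u in Z) lap e U x u.
  by rewrite -big_split; apply: sumr_ge0 => u Hu; apply: Hfeas; apply: (subsetP HZv).
have H2 : \sum_(u in Z) D u <= \sum_(u in U) `|D u|.
  apply: (le_trans (ler_sum _ (fun u _ => ler_norm (D u)))).
  have -> : Z = U :&: Z by apply/esym/setIidPr.
  by apply: sum_subset_le => i _.
have H3 : \sum_(u in Z) lap e U x u <= (e a b)%:Z * (x a - x b).
  rewrite lap_sum_set //.
  have Hneg : forall a' b', a' \in Z -> b' \in U :\: Z -> (e a' b')%:Z * (x a' - x b') <= 0.
    move=> a' b' Ha' Hb'; apply: mulr_ge0_le0 => //.
    move: Ha' Hb'; rewrite in_setD !inE => /andP[_ Ha'] /andP[Hb' Hb'U].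
    rewrite Hb'U /= -leNgt in Hb'; rewrite subr_le0; apply: ltW; exact: lt_le_trans Ha' Hb'.
  apply: le_trans (sum_single_ge Ha _) _.
    by move=> i Hi; apply: sumr_le0 => j Hj; apply: Hneg.
  by apply: sum_single_ge Hb _ => j Hj; apply: Hneg.
have H4 : (e a b)%:Z * (x a - x b) <= x a - x b.
  have Hd : x a - x b <= 0 by rewrite subr_le0; apply: ltW; exact: lt_le_trans Hat Hbn.
  have He1 : 1 <= (e a b)%:Z by rewrite lez_nat.
  exact: arith4.
exact: (arith5 H1 H2 H3 H4 Hbn).
Qed.

Lemma arith6 (k : nat) (P xa : int) : 0 <= P -> - (k%:Z * (P + 1)) - P <= xa ->
  - ((k.+1)%:Z * (P + 1)) <= xa.
Proof. lia. Qed.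
Lemma arith7 (k : nat) (P xa : int) : 0 <= P -> - (k%:Z * (P + 1)) <= xa ->
  - ((k.+1)%:Z * (P + 1)) <= xa.
Proof. nia. Qed.

Lemma xbound (T : finType) (e : T -> T -> nat) (U : {set T}) v (D : divisor T) x (P : int) :
  multigraph e -> connected_in e U -> v \in U -> x v = 0 ->
  (forall u, u \in U :\ v -> 0 <= D u + lap e U x u) ->
  \sum_(w in U) `|D w| = P ->
  forall u, u \in U -> - ((#|U|)%:Z * (P + 1)) <= x u.
Proof.
move=> He Hconn Hv Hxv Hfeas HPd.
have HP : 0 <= P by rewrite -HPd; apply: sumr_ge0.
pose A k := [set u in U | - (k%:Z * (P + 1)) <= x u].
have HAU : forall k, A k \subset U by move=> k; apply/subsetP => u; rewrite inE => /andP[].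
have Hclaim : forall k, (minn k.+1 #|U| <= #|A k|)%N.
  elim=> [|k IH].
    have : v \in A 0%N by rewrite inE Hv Hxv mul0r oppr0.
    move=> Hv0; have : (0 < #|A 0%N|)%N by apply/card_gt0P; exists v.
    move=> Hc0; rewrite /minn; case: ltnP => Hc; lia.
  have Hsub : A k \subset A k.+1.
    by apply/subsetP => u; rewrite !inE => /andP[-> Hu] /=; apply: arith7.
  case: (classic (exists2 y, y \in U & x y < - (k%:Z * (P + 1)))) => [[y Hy Hxy]|Hno].
    have Ht : - (k%:Z * (P + 1)) <= 0 by rewrite oppr_le0; apply: mulr_ge0 => //; apply: addr_ge0.
    have [a Ha /andP[Ha1 Ha2]] := bound_step He Hconn Hv Hxv Ht Hfeas Hy Hxy.
    rewrite HPd in Ha2.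
    have Hpr : A k \proper A k.+1.
      rewrite properEneq Hsub andbT; apply/eqP => Heq.
      have : a \in A k.+1 by rewrite inE Ha /=; apply: arith6.
      by rewrite -Heq inE Ha /= leNgt Ha1.
    have := proper_card Hpr; move: IH; lia.
  have : U \subset A k.
    apply/subsetP => u Hu; rewrite inE Hu /= leNgt; apply/negP => Hlt; apply: Hno; by exists u.
  move/subset_leq_card => H1; have := subset_leq_card Hsub; move: H1; lia.
move=> u Hu.
have HA : A #|U| = U.
  apply/eqP; rewrite eqEcard HAU /=; have := Hclaim #|U|; lia.
by move: Hu; rewrite -{1}HA inE => /andP[].
Qed.

Lemma arith8 (gu s dSS dSS' S' : int) :
  gu < s -> 2 * S' <= dSS' -> dSS = dSS' + 2 * s - 2 -> 2 * (gu + S') <= dSS.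
Proof. lia. Qed.

Lemma arith9 (a b c : int) : 1 <= a -> a = c + b -> 2 * b <= 2 -> 0 <= c.
Proof. lia. Qed.

Lemma cycle_deg1 (T : finType) (e : T -> T -> nat) (U : {set T}) v (D : divisor T) :
  multigraph e -> is_cycle e U -> v \in U -> 1 <= \sum_(u in U) D u ->
  Leffective e U D.
Proof.
move=> He Hcyc Hv HdegD; have [Hconn [H2 Hdeg]] := Hcyc; have [Hs H0] := He.
set P := \sum_(w in U) `|D w|.
have HP : 0 <= P by apply: sumr_ge0.
pose K : int := (#|U|)%:Z * (P + 1).
pose feas x := (forall u, u \in U :\ v -> 0 <= D u + lap e U x u) /\ x v = 0.
have Hbd : forall x, feas x -> forall u, u \in U -> 0 <= x u + K.
  move=> x [Hf Hxv] u Hu; have := xbound He Hconn Hv Hxv Hf (erefl P) Hu.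
  by rewrite /K; lia.
have [n0 [[x [Hfx Hmx]] Hmin]] : exists n, (exists x, feas x /\ absz (\sum_(u in U) (x u + K)) = n)
   /\ forall m, (exists x, feas x /\ absz (\sum_(u in U) (x u + K)) = m) -> (n <= m)%N.
  apply: ex_min_classic.
  have [x0 Hx0] := pump He Hcyc Hv.
  exists (absz (\sum_(u in U) (P * (x0 u + - x0 v) + K))), (fun u => P * (x0 u + - x0 v)); split => //.
  split; last by rewrite subrr mulr0.
  move=> u Hu; rewrite lap_scale // lap_shift //.
  have HDu : `|D u| <= P.
    apply: (sum_single_le (h := fun w => `|D w|)) => //; first by move: Hu; rewrite in_setD1 => /andP[].
  have := Hx0 u Hu; have := ler_norm (- D u); rewrite normrN.
  move: HDu HP; clear; nia.
set g := fun u => D u + lap e U x u.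
have Hnofire : forall S : {set T}, S \subset U :\ v -> S != set0 ->
    exists2 u, u \in S & g u < \sum_(b in U :\: S) (e u b)%:Z.
  move=> S HS HS0; apply: NNPP => Hno.
  have Hfire : forall u, u \in S -> \sum_(b in U :\: S) (e u b)%:Z <= g u.
    by move=> u Hu; rewrite leNgt; apply/negP => Hlt; apply: Hno; exists u.
  have HvS : v \notin S.
    by apply/negP => HvS; move: (subsetP HS v HvS); rewrite !inE eqxx.
  have HSU : S \subset U by apply: subset_trans HS (subsetDl _ _).
  pose x' := fun u => x u + - (u \in S)%:Z.
  have Hl : forall u, lap e U x' u = lap e U x u - lap e U (fun b => (b \in S)%:Z) u.
    by move=> u; rewrite /x' lap_add // lap_opp.
  have Hf' : feas x'.
    split; last by rewrite /x' (negbTE HvS) Hfx.2 subr0.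
    move=> u Hu; rewrite Hl addrA.
    case: (boolP (u \in S)) => HuS.
      by rewrite lap_ind_in // subr_ge0; apply: Hfire.
    rewrite lap_ind_out // opprK; apply: addr_ge0; first exact: Hfx.1.
    by apply: sumr_ge0.
  have := Hmin _ (ex_intro _ x' (conj Hf' erefl)).
  have [s Hs1] : exists s, s \in S by apply/set0Pn.
  have Hsum : \sum_(u in U) (x' u + K) = \sum_(u in U) (x u + K) - \sum_(u in U) (u \in S)%:Z.
    rewrite -sumrB; apply: eq_bigr => u _; rewrite /x'; lia.
  have Hge1 : 1 <= \sum_(u in U) (u \in S)%:Z.
    apply: (le_trans _ (sum_single_le (h := fun u => (u \in S)%:Z) (subsetP HSU s Hs1) _)) => //=.
    by rewrite Hs1.
  have Hp1 : 0 <= \sum_(u in U) (x' u + K) by apply: sumr_ge0 => u Hu; apply: Hbd.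
  have Hp2 : 0 <= \sum_(u in U) (x u + K) by apply: sumr_ge0 => u Hu; apply: Hbd.
  rewrite -Hmx Hsum; move: Hp1 Hp2 Hge1; rewrite Hsum.
  move: (\sum_(u in U) (x u + K)) (\sum_(u in U) (u \in S)%:Z) => A B; lia.
have Hburn : forall n (S : {set T}), #|S| = n -> S \subset U :\ v ->
    2 * \sum_(u in S) g u <= dS e U S.
  elim=> [|n IH] S Hn HS.
    move/eqP: Hn; rewrite cards_eq0 => /eqP ->; rewrite /dS !big_set0; lia.
  have HS0 : S != set0 by rewrite -card_gt0 Hn.
  have [u HuS Hu] := Hnofire S HS HS0.
  have HSU : S \subset U by apply: subset_trans HS (subsetDl _ _).
  have Hc : #|S :\ u| = n by move: Hn; rewrite (cardsD1 u) HuS add1n => -[].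
  have Hsub : S :\ u \subset U :\ v by apply: subset_trans (subsetDl S [set u]) HS.
  have HI := IH _ Hc Hsub; rewrite (bigD1 u HuS) /=.
  have -> : \sum_(i in S | i != u) g i = \sum_(i in S :\ u) g i.
    by apply: eq_bigl => i; rewrite !inE andbC.
  apply: (arith8 Hu HI); exact: dS_step.
have HUv : U :\ v \subset U :\ v by [].
have Hb := Hburn _ _ erefl HUv.
have HdS : dS e U (U :\ v) = 2.
  rewrite /dS; have -> : U :\: (U :\ v) = [set v].
    by apply/setP => w; rewrite !inE; case: (eqVneq w v) => [->|Hne] /=; [rewrite Hv | case: (w \in U)].
  rewrite (eq_bigr (fun a => (e v a)%:Z)); last by move=> a _; rewrite big_set1 Hs.
  have := Hdeg v Hv; rewrite /deg_in => Hd2.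
  have : \sum_(w in U) (e v w)%:Z = 2 by rewrite -sumz_nat Hd2.
  by rewrite (bigD1 v) //= H0 add0r => <-; apply: eq_bigl => w; rewrite !inE andbC.
rewrite HdS in Hb.
exists g; split; first by exists x.
have Hgsum : \sum_(u in U) g u = \sum_(u in U) D u.
  by rewrite /g big_split /= lap_sum0 // addr0.
move=> u Hu; case: (eqVneq u v) => [->|Huv]; last first.
  by apply: Hfx.1; rewrite in_setD1 Huv Hu.
apply: (arith9 HdegD) Hb; rewrite -Hgsum (bigD1 v) //=.
by congr (_ + _); apply: eq_bigl => w; rewrite !inE andbC.
Qed.

Lemma good_zero (T : finType) (e : T -> T -> nat) (v : T) (U : {set T}) (f : divisor T) :
  multigraph e -> v \in U -> good e U (f_zero U v f) ->
  exists x, forall u, u \in U -> f_zero U v f u + lap e U x u = 0.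
Proof.
move=> He Hv [E [[x Hx] HE]]; exists x.
have Hs0 : \sum_(u in U) f_zero U v f u = 0.
  rewrite (sum_Dv _ Hv) /f_zero eqxx.
  rewrite [X in _ + X](eq_bigr (fun u => f u)); first by rewrite addNr.
  by move=> u /andP[_ /negbTE ->].
have HE0 : \sum_(u in U) E u = 0.
  rewrite [LHS](eq_bigr (fun u => f_zero U v f u + lap e U x u)); last by move=> u Hu; rewrite (Hx u Hu).
  by rewrite big_split /= Hs0 lap_sum0 // addr0.
move=> u Hu; rewrite -(Hx u Hu).
by move/psumr_eq0P: HE0 => H; apply: H => //; apply: HE.
Qed.

Lemma keyK (T : finType) (e : T -> T -> nat) (v : T) (V1 U : {set T}) (f lam : divisor T) :
  multigraph e -> decomposes e v V1 U -> good e U (f_zero U v f) ->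
  Leffective e [set: T] (fun u => f u - lam u) <->
  exists j : int, Leffective e V1 (fun u => f_contr U v f u - lam u - j * eps v u) /\
                  Leffective e U (fun u => j * eps v u - (if u == v then 0 else lam u)).
Proof.
move=> He Hd Hg; have [Hv1 Hv2 Hc HUV] := dec_facts Hd.
have [x0 Hx0] := good_zero He Hv2 Hg.
set s := \sum_(w in U | w != v) f w.
have Hfc : f_contr U v f v = f v + s by rewrite /f_contr eqxx (sum_Dv _ Hv2).
have Hfz : f_zero U v f v = - s by rewrite /f_zero eqxx.
have HEQ := fun h => Leff_equiv0 h He (ex_intro _ x0 Hx0).
rewrite (split_Leff _ He Hd); split.
  move=> [k [H1 H2]]; exists (k + s); split.
    apply: Leff_ext H1 => u Hu; rewrite /eps; case: (eqVneq u v) => [->|Huv].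
      by rewrite Hfc ?eqxx; lia.
    by rewrite /f_contr (negbTE Huv) mulr0 subr0.
  apply/HEQ; apply: Leff_ext H2 => u Hu; rewrite /eps; case: (eqVneq u v) => [->|Huv].
    by rewrite Hfz ?eqxx; lia.
  by rewrite /f_zero (negbTE Huv) mulr0 sub0r.
move=> [j [H1 H2]]; exists (j - s); split.
  apply: Leff_ext H1 => u Hu; rewrite /eps; case: (eqVneq u v) => [->|Huv].
    by rewrite Hfc ?eqxx; lia.
  by rewrite /f_contr (negbTE Huv) mulr0 subr0.
move/HEQ: H2; apply: Leff_ext => u Hu; rewrite /eps; case: (eqVneq u v) => [->|Huv].
  by rewrite Hfz ?eqxx; lia.
by rewrite /f_zero (negbTE Huv) mulr0 sub0r.
Qed.

Lemma sum_eps1_D (T : finType) (U : {set T}) v w :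
  w \in U -> w != v -> \sum_(u in U | u != v) eps w u = 1.
Proof.
move=> Hw Hwv; rewrite (bigD1 w) /=; last by rewrite Hw Hwv.
rewrite big1 ?addr0; first by rewrite /eps eqxx.
by move=> u /andP[_ Hu]; rewrite /eps (negbTE Hu).
Qed.

Lemma sumU_split (T : finType) (U : {set T}) v (h : T -> int) :
  v \in U -> \sum_(u in U) h u = h v + \sum_(u in U | u != v) h u.
Proof. exact: sum_Dv. Qed.

Lemma rankR (T : finType) (e : T -> T -> nat) (v : T) (V1 U : {set T}) (f : divisor T) w n :
  multigraph e -> decomposes e v V1 U -> is_cycle e U -> good e U (f_zero U v f) ->
  w \in U -> w != v ->
  rank_ge e [set: T] f n <->
  rank_ge e V1 (f_contr U v f) n /\
  ((0 < n)%N -> rank_ge e V1 (fun u => f_contr U v f u - 2 * eps v u) n.-1).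
Proof.
move=> He Hd Hcyc Hg Hw Hwv; have [Hv1 Hv2 Hc HUV] := dec_facts Hd.
have HnV1 : forall u, u \in U -> u != v -> u \notin V1 by move=> u Hu Huv; rewrite Hc Hu Huv.
split.
  move=> Hr; split.
    move=> lam Hl Hdl.
    pose la := fun u => if u \in V1 then lam u else 0.
    have Hla : effective [set: T] la by move=> u _; rewrite /la; case: ifP => // Hu; apply: Hl.
    have Hdla : deg_div [set: T] la = n.
      rewrite /deg_div (sum_splitT _ Hd) -Hdl /deg_div.
      rewrite [X in _ + X]big1 ?addr0; last by move=> u /andP[Hu Huv]; rewrite /la (negbTE (HnV1 u Hu Huv)).
      by apply: eq_bigr => u Hu; rewrite /la Hu.
    have /(keyK _ He Hd Hg) [j [H1 H2]] := Hr la Hla Hdla.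
    have Hj : 0 <= j.
      have := Leff_deg He H2; rewrite sumrB sum_eps // big1 ?subr0 // => u Hu.
      by case: eqP => // /eqP Huv; rewrite /la (negbTE (HnV1 u Hu Huv)).
    have := Leff_add_eff He H1 (h := fun u => j * eps v u).
    move/(_ (fun u _ => mulr_ge0 Hj (eps_ge0 _ _))).
    by apply: Leff_ext => u Hu; rewrite /la Hu subrK.
  move=> Hn0 lam Hl Hdl.
  pose la := fun u => if u \in V1 then lam u else eps w u.
  have Hla : effective [set: T] la by move=> u _; rewrite /la; case: ifP => Hu; [apply: Hl | apply: eps_ge0].
  have Hdla : deg_div [set: T] la = n.
    rewrite /deg_div (sum_splitT _ Hd).
    rewrite [X in _ + X](eq_bigr (fun u => eps w u)); last first.
      by move=> u /andP[Hu Huv]; rewrite /la (negbTE (HnV1 u Hu Huv)).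
    rewrite sum_eps1_D // (eq_bigr lam); last by move=> u Hu; rewrite /la Hu.
    by move: Hdl; rewrite /deg_div => ->; lia.
  have /(keyK _ He Hd Hg) [j [H1 H2]] := Hr la Hla Hdla.
  have H2' : Leffective e U (fun u => j * eps v u - eps w u).
    apply: Leff_ext H2 => u Hu; case: (eqVneq u v) => [->|Huv].
      have Hvw : (v == w) = false by rewrite eq_sym (negbTE Hwv).
      by rewrite /eps Hvw ?eqxx.
    by rewrite /la (negbTE (HnV1 u Hu Huv)).
  have Hj1 : 1 <= j by have := Leff_deg He H2'; rewrite sumrB sum_eps // sum_eps1 // subr_ge0.
  have Hj2 : 2 <= j.
    case: (eqVneq j 1) => [Hj|Hj]; last by lia.
    exfalso; apply: (cycle_not_equiv He Hcyc Hv2 Hw Hwv).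
    by apply: Leff_ext H2' => u _; rewrite Hj mul1r.
  have := Leff_add_eff He H1 (h := fun u => (j - 2) * eps v u).
  have Hj2' : 0 <= j - 2 by lia.
  move/(_ (fun u _ => mulr_ge0 Hj2' (eps_ge0 _ _))).
  by apply: Leff_ext => u Hu; rewrite /la Hu; lia.
move=> [Hr1 Hr2] lam Hl Hdl; apply/(keyK _ He Hd Hg).
have Hsp := sum_splitT lam Hd; rewrite /deg_div in Hdl.
have HlV1 : effective V1 lam by move=> u _; apply: Hl; rewrite in_setT.
have HlU : forall u, 0 <= lam u by move=> u; apply: Hl; rewrite in_setT.
have Hsum2 : \sum_(u in U) (if u == v then 0 else lam u) = \sum_(u in U | u != v) lam u.
  rewrite (sumU_split _ Hv2) eqxx add0r; apply: eq_bigr => u /andP[_ /negbTE ->] //.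
have Hm0 : 0 <= \sum_(u in U | u != v) lam u by apply: sumr_ge0 => u _.
have Hs10 : 0 <= \sum_(u in V1) lam u by apply: sumr_ge0 => u _.
have [m Hm] : exists m, \sum_(u in U | u != v) lam u = m by eexists.
have [s1 Hs1] : exists s1, \sum_(u in V1) lam u = s1 by eexists.
rewrite Hm Hs1 Hdl in Hsp; rewrite Hm in Hm0 Hsum2; rewrite Hs1 in Hs10.
case: (eqVneq m 0) => [Hm00|Hmn0].
  exists 0; split.
    have := Hr1 lam HlV1; rewrite /deg_div Hs1 => /(_ ltac:(lia)).
    by apply: Leff_ext => u _; rewrite mul0r subr0.
  apply: (Leff_ext _ (eff_Leff (f := fun _ => 0) He (fun _ _ => lexx 0))) => u Hu.
  rewrite mul0r sub0r; case: eqP => [_|/eqP Huv]; first by rewrite oppr0.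
  move: Hm; rewrite Hm00 => /eqP; rewrite psumr_eq0 // => /allP /(_ u).
  by rewrite mem_index_enum Hu Huv /= => /(_ isT) /eqP ->; rewrite oppr0.
have Hm1 : 1 <= m by lia.
exists (m + 1); split.
  have Hn0 : (0 < n)%N by lia.
  have Heff : effective V1 (fun u => lam u + (m - 1) * eps v u).
    by move=> u Hu; apply: addr_ge0 => //; apply: mulr_ge0; [lia | apply: eps_ge0].
  have := Hr2 Hn0 _ Heff; rewrite /deg_div big_split /= Hs1 sum_eps // => /(_ ltac:(lia)).
  by apply: Leff_ext => u _; lia.
apply: (cycle_deg1 He Hcyc Hv2); rewrite sumrB sum_eps // Hsum2; lia.
Qed.


Lemma main_rank (T : finType) (e : T -> T -> nat) (v : T) (V1 U : {set T}) (f : divisor T) :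
  multigraph e -> decomposes e v V1 U -> is_cycle e U -> good e U (f_zero U v f) ->
  forall r r2, is_rank e V1 (f_contr U v f) r ->
  is_rank e V1 (fun u => f_contr U v f u - 2 * eps v u) r2 ->
  is_rank e [set: T] f (if r <= r2 + 1 then r else r2 + 1).
Proof.
move=> He Hd Hcyc Hg r r2 Hr Hr2.
have [Hv1 Hv2 Hc HUV] := dec_facts Hd.
have [w Hw Hwv] : exists2 w, w \in U & w != v.
  have [_ [H2 _]] := Hcyc.
  have : (0 < #|U :\ v|)%N by rewrite (cardsD1 v U) Hv2 add1n /= in H2; rewrite -ltnS.
  by case/card_gt0P => w; rewrite in_setD1 => /andP[Hwv Hw]; exists w.
have HR := fun n => rankR n He Hd Hcyc Hg Hw Hwv.
set fc := f_contr U v f in Hr Hr2 HR *.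
set fc2 := (fun u => fc u - 2 * eps v u) in Hr2 HR *.
have HLT : Leffective e [set: T] f <-> Leffective e V1 fc.
  rewrite -(rank_ge0 _ _ He) -(rank_ge0 _ _ He) HR; split; [by case | by move=> H; split].
have Hfc2fc : Leffective e V1 fc2 -> Leffective e V1 fc.
  move=> H; have := Leff_add_eff He H (h := fun u => 2 * eps v u).
  have H2e : effective V1 (fun u => 2 * eps v u) by move=> u _; rewrite mulr_ge0 ?eps_ge0.
  move/(_ H2e).
  by apply: Leff_ext => u _; rewrite /fc2 subrK.
case: Hr => [[Hn1 ->]|[Hf1 [nr [-> [Hnr Hmax1]]]]].
  case: Hr2 => [[Hn2 ->]|[Hf2 _]]; last by case: Hn1; apply: Hfc2fc.
  by left; split => // /HLT.
case: Hr2 => [[Hn2 ->]|[Hf2 [n2 [-> [Hn2 Hmax2]]]]].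
  have -> : (if Posz nr <= -1 + 1 then Posz nr else -1 + 1) = Posz 0.
    by case: ifP => H; lia.
  right; split; first by apply/HLT.
  exists 0%N; split => //; split.
    by apply/HR; split => //; apply: (rank_ge_mono He Hv1 Hnr).
  move=> m /HR [_ Hm2]; case: m Hm2 => // m Hm2.
  by case: Hn2; apply: (rank_ge_Leff He Hv1 (Hm2 isT)).
have -> : (if Posz nr <= Posz n2 + 1 then Posz nr else Posz n2 + 1) = Posz (minn nr n2.+1).
  by case: ifP => H; lia.
right; split; first by apply/HLT.
exists (minn nr n2.+1); split => //; split.
  apply/HR; split; first by apply: (rank_ge_mono He Hv1 Hnr); lia.
  by move=> Hpos; apply: (rank_ge_mono He Hv1 Hn2); lia.
move=> m /HR [Hm1 Hm2]; have := Hmax1 _ Hm1.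
case: m Hm1 Hm2 => [|m] Hm1 Hm2 Hle; first by [].
have := Hmax2 _ (Hm2 isT); simpl; lia.
Qed.

Unset Implicit Arguments.

Theorem mainTheorem5 (T : finType) (e : T -> T -> nat) (v : T) (V1 U : {set T})
  (f : divisor T) :
  multigraph e -> connected_in e [set: T] ->
  cut_vertex e v -> decomposes e v V1 U -> is_cycle e U ->
  good e U (f_zero U v f) ->
  let r := rho e V1 (f_contr U v f) in
  let r2 := rho e V1 (fun u => f_contr U v f u - 2 * eps v u) in
  (r - 1 <= r2 -> rho e [set: T] f = r) /\
  (r2 = r - 2 -> rho e [set: T] f = r - 1).
Proof.
move=> He _ _ Hd Hcyc Hg r r2.
have [Hv1 Hv2 _ _] := dec_facts Hd.
have Hr : is_rank e V1 (f_contr U v f) r := rho_spec _ He Hv1.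
have Hr2 : is_rank e V1 (fun u => f_contr U v f u - 2 * eps v u) r2 := rho_spec _ He Hv1.
have HT := main_rank He Hd Hcyc Hg Hr Hr2.
have HvT : v \in [set: T] by rewrite in_setT.
have -> := is_rank_uniq (rho_spec f He HvT) HT.
clearbody r r2; split => H; case: ifP => Hc; lia.
Qed.
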